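(* For every $y_0\in Y$ and every $\theta\ge0$, $$\bar d^*(\theta,y_0)=d^*(\theta,y_0)\le k^*(\theta,y_0).$$
   Context: Let $Y\subset\mathbb{R}^m$ be nonempty compact, $U_0$ a compact metric space, $U(\cdot):Y\rightsquigarrow U_0$ upper semicontinuous and compact-valued, and $f:\mathbb{R}^m\times U_0\to\mathbb{R}^m$, $k:\mathbb{R}^m\times U_0\to\mathbb{R}$ continuous. Put $A(y):=\{u\in U(y): f(y,u)\in Y\}$ and $G:=\{(y,u):y\in Y,\ u\in A(y)\}$. Standing assumption: $A(y)\ne\emptyset$ for all $y\in Y$. Measure spaces: - $\mathcal P(G)$ denotes the Borel probability measures on $G$ and $\mathcal M_+(G)$ the finite nonnegative Borel measures on $G$. - $W:=\{\gamma\in\mathcal P(G):\int_G(\varphi(f(y,u))-\varphi(y))\,d\gamma=0\ \forall\varphi\in C(Y)\}$. - $\Omega(y_0)$ is the set of $(\gamma,\xi)\in\mathcal P(G)\times\mathcal M_+(G)$ with $\gamma\in W$ and $\int_G(\varphi(y_0)-\varphi(y))\,\gamma(dy,du)+\int_G(\varphi(f(y,u))-\varphi(y))\,\xi(dy,du)=0$ for all $\varphi\in C(Y)$. Perturbed problems, for $\theta\ge0$: - $k^*(\theta,y_0):=\inf_{(\gamma,\xi)\in\Omega(y_0)}\left\{\int_Gk(y,u)\,\gamma(dy,du)+\theta\,\xi(G)\right\}$. - $d^*(\theta,y_0):=\sup\mu$, over triples $(\mu,\psi,\eta)\in\mathbb{R}\times C(Y)\times C(Y)$ such that for all $(y,u)\in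 G$: $$k(y,u)+\psi(y_0)-\psi(y)+\eta(f(y,u))-\eta(y)-\mu\ge0,\qquad\psi(f(y,u))-\psi(y)\ge-\theta.$$ - $\bar d^*(\theta,y_0):=\sup\psi(y_0)$, over pairs $(\psi,\eta)\in C(Y)\times C(Y)$ such that for all $(y,u)\in G$: $$k(y,u)-\psi(y)+\eta(f(y,u))-\eta(y)\ge0,\qquad\psi(f(y,u))-\psi(y)\ge-\theta.$$ *)

(* Defs.v *)
From HB Require Import structures.
From mathcomp Require Import all_boot all_order all_algebra.
From mathcomp Require Import all_classical all_reals all_analysis.
Set Implicit Arguments. Unset Strict Implicit. Unset Printing Implicit Defensive.
Import Order.TTheory GRing.Theory Num.Theory.
Import numFieldNormedType.Exports.
Local Open Scope classical_set_scope.
Local Open Scope ring_scope.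

Section Defs.
Variables (R : realType) (m : nat) (U0 : pseudoPMetricType R).

Definition St := 'rV[R]_m.
Definition X := (St * U0)%type.

Definition BX := g_sigma_algebraType (@open X).

Definition usc_on (Y : set St) (U : St -> set U0) :=
  forall y, Y y -> forall V : set U0, open V -> U y `<=` V ->
    \forall y' \near y, Y y' -> U y' `<=` V.

Definition contY (Y : set St) (phi : St -> R) := {within Y, continuous phi}.

Variables (Y : set St) (U : St -> set U0) (f : X -> St) (k : X -> R).

Definition Aset (y : St) : set U0 := [set u | U y u /\ Y (f (y, u))].
Definition Gset : set BX := [set p | Y p.1 /\ Aset p.1 p.2].

(* P(G): Borel probability measures on G, seen as Borel probability
   measures on R^m x U0 carried by G *)
Definition probG (g : probability BX R) := g (~` Gset) = 0%E.
Definition finG (xi : {finite_measure set BX -> \bar R}) := xi (~` Gset) = 0%E.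

Definition inW (g : probability BX R) :=
  probG g /\
  forall phi, contY Y phi ->
    (\int[g]_(p in Gset) (phi (f p) - phi p.1)%:E = 0)%E.

Definition inOmega (y0 : St) (g : probability BX R)
    (xi : {finite_measure set BX -> \bar R}) :=
  inW g /\ finG xi /\
  forall phi, contY Y phi ->
    (\int[g]_(p in Gset) (phi y0 - phi p.1)%:E
     + \int[xi]_(p in Gset) (phi (f p) - phi p.1)%:E = 0)%E.

Definition kstar (theta : R) (y0 : St) : \bar R :=
  ereal_inf [set z | exists (g : probability BX R)
                            (xi : {finite_measure set BX -> \bar R}),
     inOmega y0 g xi /\
     z = (\int[g]_(p in Gset) (k p)%:E + theta%:E * xi Gset)%E].

Definition dstar (theta : R) (y0 : St) : \bar R :=
  ereal_sup [set mu%:E | mu in [set mu : R | exists psi eta,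
     contY Y psi /\ contY Y eta /\
     forall p : X, Gset p ->
       0 <= k p + psi y0 - psi p.1 + eta (f p) - eta p.1 - mu /\
       - theta <= psi (f p) - psi p.1]].

Definition dbarstar (theta : R) (y0 : St) : \bar R :=
  ereal_sup [set (psi y0)%:E | psi in [set psi : St -> R | exists eta,
     contY Y psi /\ contY Y eta /\
     forall p : X, Gset p ->
       0 <= k p - psi p.1 + eta (f p) - eta p.1 /\
       - theta <= psi (f p) - psi p.1]].

End Defs.

(* Main.v *)
Require Import Defs.
From HB Require Import structures.
From mathcomp Require Import all_boot all_order all_algebra.
From mathcomp Require Import all_classical all_reals all_analysis.
Set Implicit Arguments. Unset Strict Implicit.
Import Order.TTheory GRing.Theory Num.Theory.
Import numFieldNormedType.Exports.
Local Open Scope classical_set_scope.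
Local Open Scope ring_scope.

Section Aux.
Variables (R : realType) (m : nat) (U0 : pseudoPMetricType R).

Lemma prodN (y : 'rV[R]_m) (u : U0) (B : set 'rV[R]_m) (C : set U0) :
  nbhs y B -> nbhs u C -> nbhs ((y, u) : @X R m U0) (B `*` C).
Proof. by move=> By Cu; exists (B, C). Qed.

Lemma G_closed (Y : set 'rV[R]_m) (U : 'rV[R]_m -> set U0)
  (f : 'rV[R]_m * U0 -> 'rV[R]_m) :
  compact Y -> hausdorff_space U0 -> usc_on Y U -> (forall y, Y y -> compact (U y)) ->
  continuous f -> closed (Gset Y U f : set (@X R m U0)).
Proof.
move=> cY hU usc cU cf [y u] clp.
have clY : closed Y by apply: compact_closed => //; exact: norm_hausdorff.
have Yy : Y y.
  apply: clY => B By.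
  have [[y' u'] [[/= Yy' _] [/= By' _]]] := clp _ (prodN By (@filterT _ (nbhs u) _)).
  by exists y'.
have Yf : Y (f (y, u)).
  apply: clY => B Bf.
  have [[y1 u1] [[Yq [_ Yfq]] Bq]] := clp _ (cf (y, u) B Bf).
  by exists (f (y1, u1)).
split => //; split => //=.
apply: contrapT => nUu.
have clU : closed (U y) by apply: compact_closed => //; exact: cU.
have : nbhs u (~` U y) by apply: open_nbhs_nbhs; split => //; exact/closed_openC.
move=> /nbhs_ballP[e /= e0 be].
have e20 : 0 < e / 2 by rewrite divr_gt0.
pose V := ~` closure (ball u (e / 2)).
have oV : open V by apply: closed_openC; exact: closed_closure.
have UV : U y `<=` V.
  move=> v Uv clv; have [w [buw bvw]] := clv _ (nbhsx_ballx v _ e20).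
  have : ball u e v.
    rewrite (splitr e); apply: (ball_triangle buw); exact: ball_sym.
  by move/be.
have := usc y Yy V oV UV => B0.
have [[y' u'] [[/= Yy' [Uu' _]] [/= B0y' bu']]] := clp _ (prodN B0 (nbhsx_ballx u _ e20)).
have := B0y' Yy' u' Uu'; rewrite /V /=; apply.
exact: subset_closure.
Qed.

Lemma meas_open (A : set (@BX R m U0)) : open (A : set (@X R m U0)) -> measurable A.
Proof. move=> oA; exact: sub_sigma_algebra. Qed.

Lemma mfun (T : topologicalType) (D : set (@BX R m U0)) (h : @X R m U0 -> T) (A : set T) (psi : T -> R) :
 measurable D -> continuous h -> (forall p, D p -> A (h p)) -> {within A, continuous psi} ->
 measurable_fun D (psi \o h).
Proof.
move=> mD ch DA cpsi.
apply: (measurability _ (measurable_realfun.RGenOpens.measurableE R)).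
move=> _ [_ [a [b ->] <-]].
have /open_subspaceP[V oV VA] : open (psi @^-1` `]a,b[%classic : set (subspace A)).
  by move/continuousP: cpsi; apply; exact: interval_open.
have -> : D `&` (psi \o h) @^-1` `]a,b[%classic = D `&` (h @^-1` V).
  apply/seteqP; split=> p [Dp Hp]; split => //.
  - have : (psi @^-1` `]a,b[%classic `&` A) (h p) by split => //; exact: DA.
    by rewrite -VA => -[].
  - have : (V `&` A) (h p) by split => //; exact: DA.
    by rewrite VA => -[].
apply: measurableI => //; apply: meas_open.
by move/continuousP: ch; apply.
Qed.

Lemma bnd_of (T : Type) (A : set T) (g : T -> R) (M : R) :
  (forall x, A x -> `|g x| <= M) -> [bounded g x | x in A].
Proof.
move=> H; exists M; split; first exact: num_real.
move=> M' MM' x Ax; exact: le_trans (H x Ax) (ltW MM').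
Qed.

Lemma bnd_to (A : set R) : bounded_set A -> exists M, forall x, A x -> `|x| <= M.
Proof.
case=> M [_ HM]; exists (M + 1); apply: HM.
by rewrite ltrDl.
Qed.

Lemma integ (mu : {finite_measure set (@BX R m U0) -> \bar R}) (D : set (@BX R m U0))
  (F : @X R m U0 -> R) (M : R) :
  measurable D -> measurable_fun D F -> (forall p, D p -> `|F p| <= M) ->
  mu.-integrable D (fun p => (F p)%:E).
Proof.
move=> mD mF bF; apply: measurable_bounded_integrable => //.
  by have := fin_num_measure mu D mD; rewrite fin_numElt => /andP[_ ->].
exact: bnd_of bF.
Qed.

Lemma fst_cont : continuous (fst : @X R m U0 -> 'rV[R]_m).
Proof. move=> p; exact: cvg_fst. Qed.

End Aux.

From mathcomp Require Import lra.
Lemma arith (R : realType) (a b c d x : \bar R) (mu th : R) :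
  a \is a fin_num -> b \is a fin_num -> d \is a fin_num -> x \is a fin_num ->
  (0 <= a + b + c - mu%:E)%E -> ((-th)%:E * x <= d)%E -> (b + d = 0)%E -> c = 0%E ->
  (mu%:E <= a + th%:E * x)%E.
Proof.
move: a b d x => [a| |] [b| |] [d| |] [x| |] //= _ _ _ _ h1 h2 h3 hc.
subst c; move: h1 h2 h3.
rewrite adde0 -!EFinM -!EFinD !lee_fin => h1 h2 /eqP; rewrite eqe => /eqP h3.
nra.
Qed.

Theorem lemma5p3 (R : realType) (m : nat) (U0 : pseudoPMetricType R)
  (Y : set 'rV[R]_m) (U : 'rV[R]_m -> set U0)
  (f : 'rV[R]_m * U0 -> 'rV[R]_m) (k : 'rV[R]_m * U0 -> R) :
  Y !=set0 -> compact Y ->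
  hausdorff_space U0 -> compact [set: U0] ->
  usc_on Y U -> (forall y, Y y -> compact (U y)) ->
  continuous f -> continuous k ->
  (forall y, Y y -> Aset Y U f y !=set0) ->
  forall (y0 : 'rV[R]_m) (theta : R), Y y0 -> 0 <= theta ->
    dbarstar Y U f k theta y0 = dstar Y U f k theta y0 /\
    (dstar Y U f k theta y0 <= kstar Y U f k theta y0)%E.
Proof.
move=> Yne cY hU cU0 usc cU cf ck Ane y0 theta Yy0 th0.
split.
  rewrite /dbarstar /dstar; congr ereal_sup; apply/seteqP; split.
    move=> _ [psi [eta [cpsi [ceta H]]] <-].
    exists (psi y0) => //; exists psi, eta; split => //; split => // p Gp.
    have [H1 H2] := H p Gp; split => //; lra.
  move=> _ [mu [psi [eta [cpsi [ceta H]]]] <-].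
  exists (fun y => psi y - psi y0 + mu); last by rewrite subrr add0r.
  exists eta; split; last split => //.
    move=> x; apply: cvgD; first apply: cvgD; [exact: cpsi|exact: cvg_cst|exact: cvg_cst].
  move=> p Gp; have [H1 H2] := H p Gp; split; lra.
have Gcl := G_closed cY hU usc cU cf.
have mG : measurable (Gset Y U f).
  rewrite -[Gset Y U f]setCK; apply: measurableC; apply: meas_open.
  exact: closed_openC.
apply: ub_ereal_sup => _ [mu [psi [eta [cpsi [ceta H]]]] <-].
apply: le_ereal_inf_tmp => _ [g [xi [[[pG Wg] [fG Om]] ->]]].
have [Mpsi HMpsi] := bnd_to (compact_bounded (continuous_compact cpsi cY)).
have [Meta HMeta] := bnd_to (compact_bounded (continuous_compact ceta cY)).
have [Mk HMk] := bnd_to (compact_bounded (continuous_compact (continuous_subspaceT ck) (compact_setX cY cU0))).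
have bpsi y : Y y -> `|psi y| <= Mpsi by move=> Yy; apply: HMpsi; exists y.
have beta y : Y y -> `|eta y| <= Meta by move=> Yy; apply: HMeta; exists y.
have bk p : Gset Y U f p -> `|k p| <= Mk.
  by case: p => y u [Yy _]; apply: HMk; exists (y, u).
have Gf p : Gset Y U f p -> Y (f p) by case: p => y u [_ []].
have G1 p : Gset Y U f p -> Y p.1 by case.
have mpsi1 : measurable_fun (Gset Y U f) (psi \o fst) := mfun mG (@fst_cont R m U0) G1 cpsi.
have mpsif : measurable_fun (Gset Y U f) (psi \o f) := mfun mG cf Gf cpsi.
have meta1 : measurable_fun (Gset Y U f) (eta \o fst) := mfun mG (@fst_cont R m U0) G1 ceta.
have metaf : measurable_fun (Gset Y U f) (eta \o f) := mfun mG cf Gf ceta.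
have mk : measurable_fun (Gset Y U f) (k \o id) := mfun mG (fun p => cvg_id) (fun p _ => I) (continuous_subspaceT (A := setT) ck).
have ik : g.-integrable (Gset Y U f) (fun p => (k p)%:E).
  by apply: (integ _ _ (M := Mk)) => //.
have iA : g.-integrable (Gset Y U f) (fun p => (psi y0 - psi p.1)%:E).
  apply: (integ _ _ (M := Mpsi + Mpsi)) => //.
    by apply: measurable_realfun.measurable_funB => //; exact: measurable_cst.
  move=> p Gp; apply: (le_trans (ler_normB _ _)); apply: lerD; auto.
have iB : g.-integrable (Gset Y U f) (fun p => (eta (f p) - eta p.1)%:E).
  apply: (integ _ _ (M := Meta + Meta)) => //.
    exact: measurable_realfun.measurable_funB.
  move=> p Gp; apply: (le_trans (ler_normB _ _)); apply: lerD; auto.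
have iC : xi.-integrable (Gset Y U f) (fun p => (psi (f p) - psi p.1)%:E).
  apply: (integ _ _ (M := Mpsi + Mpsi)) => //.
    exact: measurable_realfun.measurable_funB.
  move=> p Gp; apply: (le_trans (ler_normB _ _)); apply: lerD; auto.
have gG : g (Gset Y U f) = 1%E.
  have := probability_setT g.
  rewrite -(setUCr (Gset Y U f)) measureU //; last 2 first.
  - exact: measurableC.
  - exact: setICr.
  move=> h; rewrite -[RHS]h -[LHS]adde0; congr (_ + _); symmetry; exact: pG.
have icst (r : R) (mu' : {finite_measure set (@BX R m U0) -> \bar R}) :
    mu'.-integrable (Gset Y U f) (fun p => r%:E).
  exact: (integ (F := fun _ => r) (M := `|r|) mu' mG (measurable_cst _)).
have h0 : (0 <= \int[g]_(p in Gset Y U f) ((k p)%:E + (psi y0 - psi p.1)%:E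
            + (eta (f p) - eta p.1)%:E - mu%:E))%E.
  apply: integral_ge0 => p Gp; have [H1 _] := H p Gp.
  by rewrite -EFinN -!EFinD lee_fin; lra.
rewrite (integralB mG (integrableD mG (integrableD mG ik iA) iB) (icst mu g)) in h0.
rewrite (integralD mG (integrableD mG ik iA) iB) (integralD mG ik iA) in h0.
rewrite (integral_cst g mG) in h0.
rewrite [X in (_ * X)%E](_ : _ = 1%E) ?mule1 in h0; last exact: gG.
have hC : ((- theta)%:E * xi (Gset Y U f) <=
     \int[xi]_(p in Gset Y U f) (psi (f p) - psi p.1)%:E)%E.
  rewrite -(integral_cst xi mG); apply: le_integral; [exact: mG | exact: icst | exact: iC |].
  move=> p /set_mem Gp; have [_ H2] := H p Gp; by rewrite lee_fin.
have hO := Om psi cpsi.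
have hW := Wg eta ceta.
apply: (arith _ _ _ _ h0 hC hO hW).
- exact: integrable_fin_num ik.
- exact: integrable_fin_num iA.
- exact: integrable_fin_num iC.
- exact: fin_num_measure xi _ mG.
Qed.
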